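(* $S$ is antimultiplicative, that is $S(ab)=S(b)S(a)$ for all $a,b\in A$.
   Context: Let $A$ be an associative algebra over a field $k$ (possibly without identity) with non-degenerate product, multiplier algebra $M(A)$ and left multipliers $L(A)$. Let $\Delta:A\to M(A\otimes A)$ be an algebra homomorphism (not necessarily coassociative) with Galois maps $T_{1}(a\otimes b)=\Delta(a)(1\otimes b)$ and $T_{2}(a\otimes b)=(a\otimes 1)\Delta(b)$ lying in $A\otimes A$, and $\varepsilon:A\to k$ linear with $(\varepsilon\otimes\iota)T_{1}(a\otimes b)=ab=(\iota\otimes\varepsilon)T_{2}(a\otimes b)$. Suppose $T_{1},T_{2}$ are bijective, $T_{1}^{-1}=(\iota\otimes\varepsilon\otimes\iota)(\iota\otimes T_{1}^{-1})(\Delta\otimes\iota)$ (left $A$-colinear) and $T_{2}^{-1}=(\iota\otimes\varepsilon\otimes\iota)(T_{2}^{-1}\otimes\iota)(\iota\otimes\Delta)$ (right $A$-colinear); i.e. $(A,\Delta)$ is a generalized multiplier Hopf coquasigroup. The map $S:A\to L(A)$ is defined by $S(a)b=(\varepsilon\otimes\iota)T_{1}^{-1}(a\otimes b)$. *)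

(* Defs.v *)
From HB Require Import structures.
From mathcomp Require Import all_boot all_algebra.
Set Implicit Arguments. Unset Strict Implicit. Unset Printing Implicit Defensive.
Import GRing.Theory.
Local Open Scope ring_scope.

Definition lin {k : fieldType} {U V : lmodType k} (f : U -> V) : Prop :=
  forall (r : k) (x y : U), f (r *: x + y) = r *: f x + f y.

Definition linform {k : fieldType} {U : lmodType k} (f : U -> k) : Prop :=
  forall (r : k) (x y : U), f (r *: x + y) = r * f x + f y.

Definition bilin {k : fieldType} {U V W : lmodType k} (f : U -> V -> W) : Prop :=
  (forall v, lin (fun u => f u v)) /\ (forall u, lin (f u)).

Definition trilin {k : fieldType} {U V W Y : lmodType k}
  (f : U -> V -> W -> Y) : Prop :=
  (forall v w, lin (fun u => f u v w)) /\ (forall u w, lin (fun v => f u v w))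
  /\ (forall u v, lin (f u v)).

Definition is_tensor2 {k : fieldType} {U V T : lmodType k}
  (t : U -> V -> T) : Prop :=
  bilin t /\
  forall (X : lmodType k) (f : U -> V -> X), bilin f ->
    exists g : T -> X, [/\ lin g, (forall u v, g (t u v) = f u v) &
      (forall h : T -> X, lin h -> (forall u v, h (t u v) = f u v) -> h =1 g)].

Definition is_tensor3 {k : fieldType} {U V W T : lmodType k}
  (t : U -> V -> W -> T) : Prop :=
  trilin t /\
  forall (X : lmodType k) (f : U -> V -> W -> X), trilin f ->
    exists g : T -> X, [/\ lin g, (forall u v w, g (t u v w) = f u v w) &
      (forall h : T -> X, lin h -> (forall u v w, h (t u v w) = f u v w) ->
         h =1 g)].

Definition nondeg_assoc_algebra {k : fieldType} {A : lmodType k}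
  (mul : A -> A -> A) : Prop :=
  [/\ bilin mul,
      (forall a b c, mul a (mul b c) = mul (mul a b) c),
      (forall a, (forall b, mul a b = 0) -> a = 0) &
      (forall b, (forall a, mul a b = 0) -> b = 0)].

(* (l, r) is a multiplier of the algebra (X, mul):
   l x = m x  and  r x = x m. *)
Definition is_multiplier {k : fieldType} {X : lmodType k}
  (mul : X -> X -> X) (l r : X -> X) : Prop :=
  [/\ lin l, lin r,
      (forall x y, l (mul x y) = mul (l x) y),
      (forall x y, r (mul x y) = mul x (r y)) &
      (forall x y, mul (r x) y = mul x (l y))].

Definition S_of {k : fieldType} {A AA : lmodType k}
  (tens : A -> A -> AA) (epsL : AA -> A) (T1inv : AA -> AA) (a b : A) : A :=
  epsL (T1inv (tens a b)).

(* Main.v *)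
Require Import Defs.
From HB Require Import structures.
From mathcomp Require Import all_boot all_algebra.
From mathcomp Require Import boolp classical_sets.
Import GRing.Theory.
Local Open Scope classical_set_scope.
Local Open Scope ring_scope.

Definition subsp {k : fieldType} {V : lmodType k} (W : V -> Prop) :=
  W 0 /\ forall (r : k) x y, W x -> W y -> W (r *: x + y).

Lemma subspN {k : fieldType} {V : lmodType k} (W : V -> Prop) x :
  subsp W -> W x -> W (- x).
Proof. by move=> [W0 WC] Wx; have := WC (-1) _ _ Wx W0; rewrite addr0 scaleN1r. Qed.

Lemma subspD {k : fieldType} {V : lmodType k} (W : V -> Prop) x y :
  subsp W -> W x -> W y -> W (x + y).
Proof. by move=> [W0 WC] Wx Wy; have := WC 1 _ _ Wx Wy; rewrite scale1r. Qed.

Lemma subspZ {k : fieldType} {V : lmodType k} (W : V -> Prop) r x :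
  subsp W -> W x -> W (r *: x).
Proof. by move=> [W0 WC] Wx; have := WC r _ _ Wx W0; rewrite addr0. Qed.

Lemma separation {k : fieldType} {V : lmodType k} (W : V -> Prop) (v : V) :
  subsp W -> ~ W v ->
  exists phi : V -> k, [/\ linform phi, forall w, W w -> phi w = 0 & phi v = 1].
Proof.
move=> sW nWv.
pose P := fun X : set V => X = set0 \/ [/\ subsp X, W `<=` X & ~ X v].
have chainP : forall F : set (set V), F `<=` P -> total_on F subset ->
    P (\bigcup_(X in F) X).
  move=> F FP Ftot.
  have [[X0 [FX0 X0x]]|none] := pselect (exists X, F X /\ exists x, X x); last first.
    left; apply/seteqP; split=> // x [X FX Xx]; exfalso; apply: none.
    by exists X; split=> //; exists x.
  have sub X : F X -> forall x, X x -> [/\ subsp X, W `<=` X & ~ X v].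
    move=> FX x Xx; case: (FP X FX) => // X0'; by rewrite X0' in Xx.
  case: X0x => x0 X0x0.
  have [sX0 WX0 _] := sub _ FX0 _ X0x0.
  right; split.
  - split; first by exists X0 => //; case: sX0.
    move=> r x y [X1 FX1 X1x] [X2 FX2 X2y].
    have [s1 _ _] := sub _ FX1 _ X1x; have [s2 _ _] := sub _ FX2 _ X2y.
    case: (Ftot _ _ FX1 FX2) => [X12|X21].
    + by exists X2 => //; apply: s2.2 => //; apply: X12.
    + by exists X1 => //; apply: s1.2 => //; apply: X21.
  - by move=> w Ww; exists X0 => //; apply: WX0.
  - by move=> [X FX Xv]; have [_ _] := sub _ FX _ Xv.
have [A [PA Amax]] := Zorn_bigcup chainP.
have PW : P W by right; split.
have [sA WA nAv] : [/\ subsp A, W `<=` A & ~ A v].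
  case: PA => // A0; exfalso; apply: (Amax W) => //; rewrite A0; split=> //.
  by move=> /(_ 0 sW.1).
have Hex : forall u, exists l : k, A (u - l *: v).
  move=> u; apply: contrapT => nu.
  pose B := fun x => exists l : k, A (x - l *: u).
  apply: (Amax B).
    split; first by move=> x Ax; exists 0; rewrite scale0r subr0.
    move=> BA; have : B u by exists 1; rewrite scale1r subrr; case: sA.
    move=> /BA Au; apply: nu; exists 0; by rewrite scale0r subr0.
  right; split.
  - split; first by exists 0; rewrite scale0r subr0; case: sA.
    move=> r x y [l1 H1] [l2 H2]; exists (r * l1 + l2).
    have -> : r *: x + y - (r * l1 + l2) *: u = r *: (x - l1 *: u) + (y - l2 *: u).
      by rewrite scalerDl -scalerA scalerBr; rewrite opprD addrACA.
    by case: sA => _; apply.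
  - by move=> w Ww; exists 0; rewrite scale0r subr0; apply: WA.
  - move=> [l Hl]; have [l0|ln0] := eqVneq l 0.
      by apply: nAv; move: Hl; rewrite l0 scale0r subr0.
    apply: nu; exists l^-1.
    have -> : u - l^-1 *: v = (- l^-1) *: (v - l *: u).
      by rewrite scalerBr scalerA mulNr mulVf // scaleN1r opprK scaleNr addrC.
    exact: subspZ.
have uniq : forall u l1 l2, A (u - l1 *: v) -> A (u - l2 *: v) -> l1 = l2.
  move=> u l1 l2 H1 H2; apply: contrapT => ne.
  have : A ((u - l2 *: v) - (u - l1 *: v)) by apply: subspD => //; apply: subspN.
  have -> : (u - l2 *: v) - (u - l1 *: v) = (l1 - l2) *: v.
    by rewrite opprB addrCA addrAC subrr add0r scalerBl.
  move=> /(subspZ _ (l1 - l2)^-1 _ sA); rewrite scalerA mulVf ?scale1r //.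
  by rewrite subr_eq0; apply/eqP.
pose phi := fun u => proj1_sig (cid (Hex u)).
have phiP : forall u, A (u - phi u *: v) by move=> u; exact: (proj2_sig (cid (Hex u))).
exists phi; split.
- move=> r x y; apply: (uniq _ _ _ (phiP _)).
  have -> : r *: x + y - (r * phi x + phi y) *: v = r *: (x - phi x *: v) + (y - phi y *: v).
    by rewrite scalerDl -scalerA scalerBr opprD addrACA.
  by case: sA => _; apply; apply: phiP.
- move=> w Ww; apply: (uniq _ _ _ (phiP _)); rewrite scale0r subr0; exact: WA.
- apply: (uniq _ _ _ (phiP _)); rewrite scale1r subrr; by case: sA.
Qed.
Lemma lin0 {k : fieldType} {U V : lmodType k} (f : U -> V) : lin f -> f 0 = 0.
Proof.
move=> H; have E := H 1 0 0; rewrite scaler0 addr0 scale1r in E.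
by apply: (addIr (f 0)); rewrite add0r -E.
Qed.

Lemma linD {k : fieldType} {U V : lmodType k} (f : U -> V) x y : lin f -> f (x + y) = f x + f y.
Proof. by move=> H; have := H 1 x y; rewrite !scale1r. Qed.

Lemma linZ {k : fieldType} {U V : lmodType k} (f : U -> V) r x : lin f -> f (r *: x) = r *: f x.
Proof. by move=> H; have := H r x 0; rewrite !addr0 lin0 // addr0. Qed.

Lemma lin_sum {k : fieldType} {U V : lmodType k} (f : U -> V) (I : Type) (r : seq I) (F : I -> U) :
  lin f -> f (\sum_(i <- r) F i) = \sum_(i <- r) f (F i).
Proof.
move=> H; elim: r => [|a r IH]; first by rewrite !big_nil lin0.
by rewrite !big_cons linD // IH.
Qed.

Lemma lf0 {k : fieldType} {U : lmodType k} (f : U -> k) : linform f -> f 0 = 0.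
Proof.
move=> H; have E := H 1 0 0; rewrite scaler0 addr0 mul1r in E.
by apply: (addIr (f 0)); rewrite add0r -E.
Qed.

Lemma lfD {k : fieldType} {U : lmodType k} (f : U -> k) x y : linform f -> f (x + y) = f x + f y.
Proof. by move=> H; have := H 1 x y; rewrite scale1r mul1r. Qed.

Lemma lfZ {k : fieldType} {U : lmodType k} (f : U -> k) r x : linform f -> f (r *: x) = r * f x.
Proof. by move=> H; have := H r x 0; rewrite !addr0 lf0 // addr0. Qed.

Lemma lf_sum {k : fieldType} {U : lmodType k} (f : U -> k) (I : Type) (r : seq I) (F : I -> U) :
  linform f -> f (\sum_(i <- r) F i) = \sum_(i <- r) f (F i).
Proof.
move=> H; elim: r => [|a r IH]; first by rewrite !big_nil lf0.
by rewrite !big_cons lfD // IH.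
Qed.

Lemma tensor_zero {k : fieldType} {U V T : lmodType k} (t : U -> V -> T) : bilin t ->
  forall n (x : 'I_n -> U) (y : 'I_n -> V),
  (forall phi : U -> k, linform phi -> \sum_(i < n) phi (x i) *: y i = 0) ->
  \sum_(i < n) t (x i) (y i) = 0.
Proof.
move=> [tl tr]; elim=> [|n IH] x y H; first by rewrite big_ord0.
rewrite big_ord_recr /=.
pose x' i := x (widen_ord (leqnSn n) i).
pose Wsp := fun u => exists c : 'I_n -> k, u = \sum_(i < n) c i *: x' i.
have sWsp : subsp Wsp.
  split; first by exists (fun _ => 0); rewrite big1 // => i _; rewrite scale0r.
  move=> r u w [c1 ->] [c2 ->]; exists (fun i => r * c1 i + c2 i).
  by rewrite scaler_sumr -big_split /=; apply: eq_bigr => i _; rewrite scalerDl scalerA.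
have [[c Hc]|nW] := pselect (Wsp (x ord_max)).
- pose y' i := y (widen_ord (leqnSn n) i) + c i *: y ord_max.
  have E1 : \sum_(i < n) t (x' i) (y' i) =
     \sum_(i < n) t (x' i) (y (widen_ord (leqnSn n) i)) + t (x ord_max) (y ord_max).
    rewrite Hc (lin_sum (fun u => t u (y ord_max))) // -big_split /=.
    apply: eq_bigr => i _; rewrite /y' linD // linZ //.
    by rewrite (linZ (fun u => t u (y ord_max))).
  rewrite -E1; apply: IH => phi Hphi.
  have := H phi Hphi; rewrite big_ord_recr /= => E; rewrite -[X in _ = X]E.
  rewrite Hc lf_sum // scaler_suml.
  rewrite -[X in _ = X]big_split /=.
  apply: eq_bigr => i _; rewrite /y' scalerDr lfZ // scalerA mulrC.
  by [].
- have [phi [Hphi phiW phiv]] := separation _ _ sWsp nW.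
  have H0 := H phi Hphi; rewrite big_ord_recr /= phiv scale1r big1 ?add0r in H0; last first.
    move=> i _; rewrite phiW ?scale0r //.
    exists (fun j => if j == i then 1 else 0).
    rewrite (bigD1 i) //= eqxx scale1r big1 ?addr0 // => j /negbTE ->.
    by rewrite scale0r.
  rewrite H0 (lin0 _ (tr _)) addr0.
  apply: IH => phi' Hphi'.
  have := H phi' Hphi'; rewrite big_ord_recr /= H0 scaler0 addr0.
  by [].
Qed.

Lemma tensor_decomp {k : fieldType} {U V T : lmodType k} (t : U -> V -> T) : is_tensor2 t ->
  forall s : T, exists n (x : 'I_n -> U) (y : 'I_n -> V), s = \sum_(i < n) t (x i) (y i).
Proof.
move=> [[tl tr] Huniv] s.
pose W := fun s => exists l : seq (U * V), s = \sum_(p <- l) t p.1 p.2.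
have sW : subsp W.
  split; first by exists [::]; rewrite big_nil.
  move=> r u w [l1 ->] [l2 ->]; exists (map (fun p => (r *: p.1, p.2)) l1 ++ l2).
  rewrite big_cat big_map /= scaler_sumr; congr (_ + _).
  by apply: eq_bigr => p _; rewrite (linZ (fun u => t u p.2)).
have [[l Hl]|nW] := pselect (W s); last first.
  have [phi [Hphi phiW phis]] := separation _ _ sW nW.
  have b0 : bilin (fun (_ : U) (_ : V) => (0 : k^o)).
    by split=> ? r ? ?; rewrite scaler0 addr0.
  have [g [_ _ gu]] := Huniv _ _ b0.
  have phiW' : forall u v, (phi : T -> k^o) (t u v) = 0.
    by move=> u v; apply: phiW; exists [:: (u, v)]; rewrite big_seq1.
  have E1 := gu (phi : T -> k^o) Hphi phiW'.
  have E2 := gu (fun _ => (0 : k^o)) (fun r x y => etrans (esym (addr0 0)) (congr1 (fun z => z + 0) (esym (scaler0 _ r)))) (fun _ _ => erefl).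
  have := E1 s; rewrite -(E2 s) phis => /eqP; by rewrite oner_eq0.
exists (size l), (fun i => (nth (0, 0) l i).1), (fun i => (nth (0, 0) l i).2).
by rewrite Hl (big_nth (0, 0)) big_mkord.
Qed.

Lemma linN {k : fieldType} {U V : lmodType k} (f : U -> V) x : lin f -> f (- x) = - f x.
Proof. by move=> H; rewrite -scaleN1r linZ // scaleN1r. Qed.

Lemma linB {k : fieldType} {U V : lmodType k} (f : U -> V) x y : lin f -> f (x - y) = f x - f y.
Proof. by move=> H; rewrite linD // linN. Qed.

Theorem lemma3p2
  (k : fieldType) (A AA AAA : lmodType k)
  (* the algebra A *)
  (mulA : A -> A -> A) (HA : nondeg_assoc_algebra mulA)
  (* A (x) A and A (x) A (x) A *)
  (tens : A -> A -> AA) (Htens : is_tensor2 tens)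
  (tens3 : A -> A -> A -> AAA) (Htens3 : is_tensor3 tens3)
  (* product of the algebra A (x) A *)
  (mulAA : AA -> AA -> AA) (HmulAA_bil : bilin mulAA)
  (HmulAA : forall a b c d,
     mulAA (tens a b) (tens c d) = tens (mulA a c) (mulA b d))
  (* Delta : A -> M(A (x) A), Delta a = (Dl a, Dr a) *)
  (Dl Dr : A -> AA -> AA)
  (HDmult : forall a, is_multiplier mulAA (Dl a) (Dr a))
  (HDlin : forall (r : k) a b x,
     Dl (r *: a + b) x = r *: Dl a x + Dl b x /\
     Dr (r *: a + b) x = r *: Dr a x + Dr b x)
  (HDhom : forall a b x,
     Dl (mulA a b) x = Dl a (Dl b x) /\ Dr (mulA a b) x = Dr b (Dr a x))
  (* Galois maps T1 (a (x) b) = Delta(a)(1 (x) b), T2 (a (x) b) = (a (x) 1)Delta(b),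
     lying in A (x) A *)
  (T1 T2 : AA -> AA) (HT1lin : lin T1) (HT2lin : lin T2)
  (HT1 : forall a b c d,
     mulAA (T1 (tens a b)) (tens c d) = Dl a (tens c (mulA b d)))
  (HT2 : forall a b c d,
     mulAA (tens c d) (T2 (tens a b)) = Dr b (tens (mulA c a) d))
  (* counit-like map eps *)
  (eps : A -> k) (Heps : linform eps)
  (epsL epsR : AA -> A) (HepsLlin : lin epsL) (HepsRlin : lin epsR)
  (HepsL : forall a b, epsL (tens a b) = eps a *: b)
  (HepsR : forall a b, epsR (tens a b) = eps b *: a)
  (HepsT1 : forall a b, epsL (T1 (tens a b)) = mulA a b)
  (HepsT2 : forall a b, epsR (T2 (tens a b)) = mulA a b)
  (* bijectivity of T1, T2 *)
  (T1inv T2inv : AA -> AA)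
  (HT1inv : cancel T1 T1inv /\ cancel T1inv T1)
  (HT2inv : cancel T2 T2inv /\ cancel T2inv T2)
  (* auxiliary canonical maps, determined by their values on pure tensors *)
  (tl : A -> AA -> AAA) (Htl_lin : forall a, lin (tl a))
  (Htl : forall a b c, tl a (tens b c) = tens3 a b c)           (* a (x) t *)
  (tr : AA -> A -> AAA) (Htr_lin : forall c, lin (fun t => tr t c))
  (Htr : forall a b c, tr (tens a b) c = tens3 a b c)           (* t (x) c *)
  (lm1 : A -> AA -> AA) (Hlm1_lin : forall c, lin (lm1 c))
  (Hlm1 : forall c a b, lm1 c (tens a b) = tens (mulA c a) b)   (* (c (x) 1) t *)
  (rm1 : A -> AA -> AA) (Hrm1_lin : forall c, lin (rm1 c))
  (Hrm1 : forall c a b, rm1 c (tens a b) = tens a (mulA b c))   (* t (1 (x) c) *)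
  (idT1inv : AAA -> AAA) (HidT1inv_lin : lin idT1inv)
  (HidT1inv : forall a b c,
     idT1inv (tens3 a b c) = tl a (T1inv (tens b c)))           (* id (x) T1^{-1} *)
  (T2invid : AAA -> AAA) (HT2invid_lin : lin T2invid)
  (HT2invid : forall a b c,
     T2invid (tens3 a b c) = tr (T2inv (tens a b)) c)           (* T2^{-1} (x) id *)
  (mideps : AAA -> AA) (Hmideps_lin : lin mideps)
  (Hmideps : forall a b c,
     mideps (tens3 a b c) = eps b *: tens a c)                  (* id (x) eps (x) id *)
  (* left A-colinearity of T1^{-1} (covered by c (x) 1 (x) 1 on the left) *)
  (HcolinL : forall a b c,
     lm1 c (T1inv (tens a b)) = mideps (idT1inv (tr (T2 (tens c a)) b)))
  (* right A-colinearity of T2^{-1} (covered by 1 (x) 1 (x) c on the right) *)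
  (HcolinR : forall a b c,
     rm1 c (T2inv (tens a b)) = mideps (T2invid (tl a (T1 (tens b c))))) :
  (* S(ab) = S(b) S(a) as left multipliers of A *)
  forall a b c : A,
    S_of tens epsL T1inv (mulA a b) c =
    S_of tens epsL T1inv b (S_of tens epsL T1inv a c).
Proof.
move=> a b c.
have [Hbil Hassoc HndL HndR] := HA.
have [HT1c HT1ic] := HT1inv.
have Hm1 : forall t, lin (fun s => mulAA s t) := fun t => HmulAA_bil.1 t.
have Hm2 : forall s, lin (mulAA s) := HmulAA_bil.2.
have HR1lin : lin T1inv.
  by move=> r x y; apply: (can_inj HT1c); rewrite HT1lin !HT1ic.
have HDl : forall x, lin (Dl x) by move=> x; case: (HDmult x).
have HDlm : forall x s t, Dl x (mulAA s t) = mulAA (Dl x s) t by move=> x; case: (HDmult x).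
have HAl : forall f, lin (fun a => mulA a f) := fun f => Hbil.1 f.
have HAr : forall a, lin (mulA a) := Hbil.2.
have Gmap : forall phi : A -> k, linform phi ->
    exists g : AA -> A, lin g /\ forall p q, g (tens p q) = phi p *: q.
  move=> phi Hphi; have bil : bilin (fun p q : A => phi p *: q : A).
    split=> [q r p1 p2 | p r q1 q2]; first by rewrite lfD // lfZ // scalerDl scalerA.
    by rewrite scalerDr !scalerA mulrC.
  by have [g [Hg Hg2 _]] := Htens.2 _ _ bil; exists g.
have Hmap : forall psi : A -> k, linform psi ->
    exists g : AA -> A, lin g /\ forall p q, g (tens p q) = psi q *: p.
  move=> psi Hpsi; have bil : bilin (fun p q : A => psi q *: p : A).
    split=> [q r p1 p2 | p r q1 q2]; last by rewrite lfD // lfZ // scalerDl scalerA.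
    by rewrite scalerDr !scalerA mulrC.
  by have [g [Hg Hg2 _]] := Htens.2 _ _ bil; exists g.
have ndAA : forall s, (forall e f, mulAA s (tens e f) = 0) -> s = 0.
  move=> s Hs; have [n [x [y Es]]] := tensor_decomp _ Htens s.
  rewrite Es in Hs *.
  have step1 : forall e, \sum_(i < n) tens (mulA (x i) e) (y i) = 0.
    move=> e; apply: (tensor_zero _ Htens.1) => phi Hphi.
    apply: HndL => f.
    have [g [Hg Hgt]] := Gmap phi Hphi.
    rewrite (lin_sum (fun a => mulA a f)) //.
    have := congr1 g (Hs e f); rewrite (lin0 g Hg) (lin_sum (fun s => mulAA s _)) // (lin_sum g) // => E.
    rewrite -[X in _ = X]E.
    by apply: eq_bigr => i _; rewrite HmulAA Hgt (linZ (fun a => mulA a f)).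
  have step2 : forall psi : A -> k, linform psi -> \sum_(i < n) psi (y i) *: x i = 0.
    move=> psi Hpsi; apply: HndL => e.
    have [g [Hg Hgt]] := Hmap psi Hpsi.
    rewrite (lin_sum (fun a => mulA a e)) //.
    have := congr1 g (step1 e); rewrite (lin0 g Hg) (lin_sum g) // => E.
    rewrite -[X in _ = X]E.
    by apply: eq_bigr => i _; rewrite Hgt (linZ (fun a => mulA a e)).
  have bflip : bilin (fun q p => tens p q).
    by case: Htens => [[l r] _]; split; [exact: r | exact: l].
  exact: (tensor_zero _ bflip n y x step2).
have [mm [Hmm Hmmt _]] := Htens.2 _ _ Hbil.
have Keps : forall s, mm (T1inv s) = epsL s.
  suff H : forall s, mm s = epsL (T1 s) by move=> s; rewrite H HT1ic.
  move=> s; have [n [x [y ->]]] := tensor_decomp _ Htens s.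
  rewrite (lin_sum mm) // (lin_sum T1) // (lin_sum epsL) //.
  by apply: eq_bigr => i _; rewrite Hmmt HepsT1.
have Klmm : forall x s, mm (lm1 x s) = mulA x (mm s).
  move=> x s; have [n [p [q ->]]] := tensor_decomp _ Htens s.
  rewrite (lin_sum (lm1 x)) // !(lin_sum mm) // (lin_sum (mulA x)) //.
  by apply: eq_bigr => i _; rewrite Hlm1 !Hmmt Hassoc.
have KlmT1 : forall x w e f,
    mulAA (T1 (lm1 x w)) (tens e f) = Dl x (mulAA (T1 w) (tens e f)).
  move=> x w e f; have [n [p [q ->]]] := tensor_decomp _ Htens w.
  rewrite (lin_sum (lm1 x)) // !(lin_sum T1) // !(lin_sum (fun s => mulAA s _)) //.
  rewrite (lin_sum (Dl x)) //.
  by apply: eq_bigr => i _; rewrite Hlm1 !HT1 (proj1 (HDhom _ _ _)).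
have C1 : forall a b c n (x : 'I_n -> A) (y : 'I_n -> A),
    T1inv (tens a c) = \sum_(i < n) tens (x i) (y i) ->
    T1inv (tens (mulA a b) c) = \sum_(i < n) lm1 (x i) (T1inv (tens b (y i))).
  move=> a' b' c' n x y Hd.
  apply: (can_inj HT1c); rewrite HT1ic.
  apply/eqP; rewrite -subr_eq0; apply/eqP; apply: ndAA => e f.
  rewrite (linB (fun s => mulAA s _)) //; apply/eqP; rewrite subr_eq0; apply/eqP.
  rewrite (lin_sum T1) // (lin_sum (fun s => mulAA s _)) //.
  under eq_bigr do rewrite KlmT1 HT1ic HmulAA -HT1.
  rewrite -(lin_sum (fun s => mulAA s _)) // -(lin_sum T1) // -Hd HT1ic.
  by rewrite !HmulAA Hassoc.
have Kmult : forall x p q : A, eps (mulA x p) *: q = eps x *: (eps p *: q).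
  move=> x p q.
  have [n [xs [ys Hd]]] := tensor_decomp _ Htens (T1inv (tens x q)).
  have E := C1 x p q n xs ys Hd.
  rewrite -HepsL -Keps E (lin_sum mm) //.
  under eq_bigr do rewrite Klmm Keps HepsL (linZ (mulA _)) //.
  rewrite -scaler_sumr.
  under eq_bigr do rewrite -Hmmt.
  rewrite -(lin_sum mm) // -Hd Keps HepsL scalerA mulrC -scalerA.
  by [].
have K2 : forall (x : A) (w : AA), epsL (lm1 x w) = eps x *: epsL w.
  move=> x w; have [n [p [q ->]]] := tensor_decomp _ Htens w.
  rewrite (lin_sum (lm1 x)) // !(lin_sum epsL) // scaler_sumr.
  by apply: eq_bigr => i _; rewrite Hlm1 !HepsL Kmult.
rewrite /S_of.
have [n [xs [ys Hd]]] := tensor_decomp _ Htens (T1inv (tens a c)).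
rewrite (C1 a b c n xs ys Hd) Hd (lin_sum epsL) // (lin_sum epsL) //.
under eq_bigr do rewrite K2.
under [X in tens b X]eq_bigr do rewrite HepsL.
rewrite (lin_sum (tens b)) //; last by case: Htens => [[_ r] _].
rewrite (lin_sum T1inv) // (lin_sum epsL) //.
apply: eq_bigr => i _.
have Hb : lin (tens b) by case: Htens => [[_ r] _].
by rewrite (linZ _ _ _ Hb) (linZ _ _ _ HR1lin) (linZ _ _ _ HepsLlin).
Qed.
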